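(* Let $W(x_1,\dots,x_n)$ be an invertible, non-degenerate, quasi-homogeneous polynomial with $2\sum_jw_j=d$, let $J_W^2\in G\subseteq\operatorname{SL}_W$, $V=x_0^2+W$, $J_V=\sigma J_W$, and $\mathcal H=\mathcal H_{G[\sigma,J_W]}(V)^{G[J_V]}$. For $L\in\{G,\sigma G,J_WG,J_VG\}$ set $[\mathcal H]_L=\bigoplus_{g\in L}\operatorname{Jac}(V_g)^{G[J_V]}$. Then $\mathcal H=[\mathcal H]_G\oplus[\mathcal H]_{\sigma G}\oplus[\mathcal H]_{J_WG}\oplus[\mathcal H]_{J_VG}$, where $[\mathcal H]_G\oplus[\mathcal H]_{J_VG}$ is $\mathbb Z\times\mathbb Z$-graded and $[\mathcal H]_{\sigma G}\oplus[\mathcal H]_{J_WG}$ is $(\tfrac12+\mathbb Z)\times(\tfrac12+\mathbb Z)$-graded.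
   Context: $W=\sum_i\prod_jx_j^{m_{i,j}}$ with invertible exponent matrix, weights $w_j$, degree $d$, non-degenerate. $\operatorname{Aut}_W$: diagonal symmetries; $\operatorname{SL}_W=\operatorname{Aut}_W\cap\operatorname{SL}(n;\mathbb C)$; $J_W=(e^{2\pi iw_j/d})_j$, regarded as a symmetry of $V$ fixing $x_0$ (as is $G$); $\sigma=(-1,1,\dots,1)$ on $(x_0,\dots,x_n)$; $V$ has weights $(d/2,w_1,\dots,w_n)$ and degree $d$, and $J_V=\sigma J_W$ is its grading element. $L[h]$ is the group generated by $L$ and $h$. For $g$ a diagonal symmetry of $V$, $F_g$ is the set of indices of $g$-fixed coordinates, $V_g$ the restriction, $\operatorname{Jac}(V_g)=\mathbb C[x_j:j\in F_g]/(\partial_jV_g)\cdot\bigwedge_{j\in F_g}dx_j$; $\mathcal H_S(V)^K=\bigoplus_{g\in S}\operatorname{Jac}(V_g)^K$, where $h=\frac1D(p_0,\dots,p_n)$ acts on $\prod x_j^{a_j}\bigwedge dx_j$ by $e^{2\pi i\sum_{j\in F_g}(a_j+1)p_j/D}$. Bi-degree of that form: $(\#F_g-\deg+\operatorname{a}(g),\deg+\operatorname{a}(g))$, $\deg=\sum_{j\in F_g}(a_j+1)w_j/d$ (with $w_0=d/2$), $\operatorname{a}(g)=\sum_jp_j/D$, $0\le p_j<D$. *)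

(* Defs.v *)
From HB Require Import structures.
From mathcomp Require Import all_boot all_order all_algebra all_field.
From mathcomp Require Import mpoly.
Set Implicit Arguments. Unset Strict Implicit. Unset Printing Implicit Defensive.
Import Order.TTheory GRing.Theory Num.Theory.
Local Open Scope ring_scope.

(* Coordinates x_0, x_1, ..., x_n are indexed by 'I_n.+1; x_0 is ord0 and
   x_{k+1} is (lift ord0 k) for k : 'I_n.
   A diagonal symmetry (e^{2 pi i p_0/D}, ..., e^{2 pi i p_n/D}) with
   0 <= p_j < D is represented by its exponent vector j |-> p_j/D in [0,1)
   (all diagonal symmetries of W, V have root-of-unity entries since the
   exponent matrix is invertible). *)
Definition dsym (n : nat) := 'I_n.+1 -> rat.

Definition fracpart (q : rat) : rat := q - (Num.floor q)%:~R.
Definition isint (q : rat) : Prop := q \is a Num.int.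
Definition ishalfint (q : rat) : Prop := isint (q - 1 / 2).

Definition dmul n (g h : dsym n) : dsym n := fun j => fracpart (g j + h j).
Definition done_ n : dsym n := fun _ => 0.
Arguments done_ n : clear implicits.

Inductive gen n (S : dsym n -> Prop) : dsym n -> Prop :=
| gen_one : gen S (done_ n)
| gen_in g : S g -> gen S g
| gen_mul g h : gen S g -> gen S h -> gen S (dmul g h).

Definition coset n (G : dsym n -> Prop) (x g : dsym n) : Prop :=
  exists h, G h /\ g = dmul x h.

Definition sigma n : dsym n := fun j => if j == ord0 then 1 / 2 else 0.
Arguments sigma n : clear implicits.
Definition JW n (w : 'I_n -> nat) (d : nat) : dsym n := fun j =>
  match unlift ord0 j with
  | Some k => fracpart ((w k)%:R / d%:R)
  | None => 0
  end.
Definition JV n w d : dsym n := dmul (sigma n) (JW w d).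

Definition Wpoly n (E : 'M[nat]_n) : {mpoly algC[n]} :=
  \sum_(i < n) \prod_(j < n) 'X_j ^+ E i j.

(* V_g : restriction of V to the fixed locus {x_j = 0, j notin F_g} *)
Definition Fg n (g : dsym n) : pred 'I_n.+1 := fun j => g j == 0.
Definition Vres n (E : 'M[nat]_n) (g : dsym n) : {mpoly algC[n.+1]} :=
  (if g ord0 == 0 then 'X_ord0 ^+ 2 else 0) +
  \sum_(i < n | [forall j, (E i j != 0%N) ==> (g (lift ord0 j) == 0)])
     \prod_(j < n) 'X_(lift ord0 j) ^+ E i j.

Definition mono n (a : 'I_n.+1 -> nat) : {mpoly algC[n.+1]} :=
  \prod_(j < n.+1) 'X_j ^+ a j.

(* For p and V_g only
   involving the variables of F_g, this is equivalent to membership in the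
   ideal of C[x_j : j in F_g] (substitute 0 for the other variables). *)
Definition in_jac n (E : 'M[nat]_n) (g : dsym n) (p : {mpoly algC[n.+1]}) :
  Prop :=
  exists c : 'I_n.+1 -> {mpoly algC[n.+1]},
    p = \sum_(j < n.+1 | Fg g j) c j * mderiv j (Vres E g).

Definition qV n (w : 'I_n -> nat) (d : nat) (j : 'I_n.+1) : rat :=
  match unlift ord0 j with
  | Some k => (w k)%:R / d%:R
  | None => 1 / 2
  end.

(* h acts on x^a /\_{j in F_g} dx_j by exp(2 pi i sum_{j in F_g} (a_j+1) h_j) *)
Definition form_invariant n (K : dsym n -> Prop) (g : dsym n)
  (a : 'I_n.+1 -> nat) : Prop :=
  forall h, K h -> isint (\sum_(j < n.+1 | Fg g j) (a j).+1%:R * h j).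

Definition degf n w d (g : dsym n) (a : 'I_n.+1 -> nat) : rat :=
  \sum_(j < n.+1 | Fg g j) (a j).+1%:R * qV w d j.
Definition age n (g : dsym n) : rat := \sum_(j < n.+1) g j.

Definition bideg n w d (g : dsym n) (a : 'I_n.+1 -> nat) : rat * rat :=
  ((#|Fg g|)%:R - degf w d g a + age g, degf w d g a + age g).

Definition jac_inv_form n E (K : dsym n -> Prop) (g : dsym n)
  (a : 'I_n.+1 -> nat) : Prop :=
  (forall j, ~~ Fg g j -> a j = 0%N) /\ form_invariant K g a /\
  ~ in_jac E g (mono a).

(* Main.v *)
Require Import Defs.
From HB Require Import structures.
From mathcomp Require Import all_boot all_order all_algebra all_field.
From mathcomp Require Import mpoly.
From mathcomp Require Import ring.
From Stdlib Require Import FunctionalExtensionality.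
Import Order.TTheory GRing.Theory Num.Theory.
Local Open Scope ring_scope.
Set Implicit Arguments. Unset Strict Implicit.

Lemma isint_half : ~ isint (1/2 : rat).
Proof. by []. Qed.

Lemma isint_D (x y : rat) : isint x -> isint y -> isint (x + y).
Proof. by rewrite /isint; apply: rpredD. Qed.
Lemma isint_N (x : rat) : isint x -> isint (- x).
Proof. by rewrite /isint rpredN. Qed.
Lemma isint_B (x y : rat) : isint x -> isint y -> isint (x - y).
Proof. by rewrite /isint; apply: rpredB. Qed.
Lemma isint_nat (k : nat) : isint (k%:R : rat).
Proof. exact: natr_int. Qed.
Lemma isint_0 : isint (0 : rat). Proof. exact: int_num0. Qed.
Lemma isint_M (x y : rat) : isint x -> isint y -> isint (x * y).
Proof. by rewrite /isint; apply: rpredM. Qed.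

Lemma frac_int (q : rat) : isint (fracpart q - q).
Proof.
rewrite /fracpart.
have -> : q - (Num.floor q)%:~R - q = - (Num.floor q)%:~R by ring.
apply: isint_N; exact: intr_int.
Qed.

Lemma fracpart_eq (x y : rat) : isint (x - y) -> fracpart x = fracpart y.
Proof.
move=> H; rewrite /fracpart.
have -> : x = y + (x - y) by ring.
rewrite Num.Theory.floorDrz // rmorphD /= (Num.Theory.floorK H).
ring.
Qed.

Lemma fracpart_idem (q : rat) : fracpart (fracpart q) = fracpart q.
Proof. exact/fracpart_eq/frac_int. Qed.

Lemma fracpart_small (q : rat) : 0 <= q -> q < 1 -> fracpart q = q.
Proof.
move=> h0 h1; rewrite /fracpart (@Num.Theory.floor_def _ q 0) ?subr0 //.
by rewrite h0 /= add0r.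
Qed.

Lemma fracpart0 : fracpart (0 : rat) = 0.
Proof. by rewrite fracpart_small. Qed.
Lemma fracpart_half : fracpart (1/2 : rat) = 1/2.
Proof. by rewrite fracpart_small. Qed.

Lemma half_not (a : rat) : isint a -> isint (a - 1/2) -> False.
Proof.
move=> h1 h2; apply: isint_half.
have -> : (1/2 : rat) = a - (a - 1/2) by ring.
exact: isint_B.
Qed.

Definition veq n (u v : dsym n) := forall j, isint (u j - v j).
Definition normal n (u : dsym n) := forall j, u j = fracpart (u j).

Lemma dmulE n (a b : dsym n) j : isint (dmul a b j - (a j + b j)).
Proof. exact: frac_int. Qed.

Lemma normal_dmul n (a b : dsym n) : normal (dmul a b).
Proof. by move=> j; rewrite /dmul fracpart_idem. Qed.

Lemma eq_of_veq n (u v : dsym n) : normal u -> normal v -> veq u v -> u = v.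
Proof.
move=> nu nv e; apply: functional_extensionality => j.
by rewrite nu nv; apply: fracpart_eq.
Qed.

Lemma sigma0 n : sigma n ord0 = 1/2.
Proof. by rewrite /sigma eqxx. Qed.
Lemma sigmaS n (k : 'I_n) : sigma n (lift ord0 k) = 0.
Proof. by rewrite /sigma eq_sym (negbTE (neq_lift _ _)). Qed.
Lemma JW0 n w d : @JW n w d ord0 = 0.
Proof. by rewrite /JW unlift_none. Qed.
Lemma JWS n w d (k : 'I_n) : @JW n w d (lift ord0 k) = fracpart ((w k)%:R / d%:R).
Proof. by rewrite /JW liftK. Qed.
Lemma qV0 n w d : @qV n w d ord0 = 1/2.
Proof. by rewrite /qV unlift_none. Qed.
Lemma qVS n w d (k : 'I_n) : @qV n w d (lift ord0 k) = (w k)%:R / d%:R.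
Proof. by rewrite /qV liftK. Qed.

Lemma sigma2 n j : isint (sigma n j + sigma n j).
Proof.
rewrite /sigma; case: (j == ord0).
  have -> : (1/2 + 1/2 : rat) = 1 by field. exact: int_num1.
by rewrite addr0; apply: isint_0.
Qed.

Lemma normal_sigma n : normal (sigma n).
Proof. by move=> j; rewrite /sigma; case: (j == ord0); rewrite ?fracpart_half ?fracpart0. Qed.

Lemma normal_JW n w d : normal (@JW n w d).
Proof.
move=> j; rewrite /JW; case: (unlift ord0 j) => [k|]; first by rewrite fracpart_idem.
by rewrite fracpart0.
Qed.

Definition A n (u : dsym n) : rat := \sum_(j < n.+1) u j.

Lemma sum_dmul n (a b : dsym n) : isint (A (dmul a b) - (A a + A b)).
Proof.
rewrite /A -big_split /= -sumrB /isint; apply: rpred_sum => j _; exact: dmulE.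
Qed.

Lemma A_sigma n : A (sigma n) = 1/2.
Proof.
rewrite /A big_ord_recl sigma0 big1 ?addr0 // => k _; exact: sigmaS.
Qed.

Lemma wd_small n (w : 'I_n -> nat) d k : (2 * \sum_(j < n) w j = d)%N ->
  (0 < d)%N -> fracpart ((w k)%:R / d%:R : rat) = (w k)%:R / d%:R.
Proof.
move=> hd d0; apply: fracpart_small.
  by apply: divr_ge0; apply: ler0n.
have hk : (w k <= \sum_(j < n) w j)%N by rewrite (bigD1 k) //= leq_addr.
have hkd : (w k < d)%N.
  rewrite -hd; apply: (leq_ltn_trans hk).
  rewrite mul2n -addnn -{1}[X in (X < _)%N]addn0 ltn_add2l.
  move: d0; rewrite -hd. by rewrite muln_gt0.
rewrite ltr_pdivrMr ?ltr0n // mul1r ltr_nat. exact: hkd.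
Qed.

Lemma A_JW n w d : (2 * \sum_(j < n) w j = d)%N -> (0 < d)%N -> A (@JW n w d) = 1/2.
Proof.
move=> hd d0; rewrite /A big_ord_recl JW0 add0r.
under eq_bigr => k _ do rewrite JWS wd_small //.
rewrite -mulr_suml -natr_sum -hd natrM.
have s0 : ((\sum_(j < n) w j)%:R : rat) != 0.
  by rewrite pnatr_eq0 -lt0n; move: d0; rewrite -hd muln_gt0.
by field; rewrite s0.
Qed.

Lemma JV_q n w d j : (2 * \sum_(j < n) w j = d)%N -> (0 < d)%N ->
  @JV n w d j = qV w d j.
Proof.
move=> hd d0; rewrite /JV /dmul.
case: (unliftP ord0 j) => [k ->|->].
  by rewrite sigmaS JWS add0r fracpart_idem wd_small // qVS.
by rewrite sigma0 JW0 addr0 fracpart_half qV0.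
Qed.

Lemma JV0 n w d : @JV n w d ord0 = 1/2.
Proof. by rewrite /JV /dmul sigma0 JW0 addr0 fracpart_half. Qed.

Lemma A_JV n w d : (2 * \sum_(j < n) w j = d)%N -> (0 < d)%N ->
  isint (A (@JV n w d) - 1).
Proof.
move=> hd d0; have := sum_dmul (sigma n) (JW w d).
by rewrite A_sigma A_JW // -/(JV w d); have -> : (1/2 + 1/2 : rat) = 1 by field.
Qed.

Lemma coset_age n (x h : dsym n) : isint (A h) -> isint (A (dmul x h) - A x).
Proof.
move=> Ah; have := sum_dmul x h => e.
have -> : A (dmul x h) - A x = (A (dmul x h) - (A x + A h)) + A h by ring.
exact: isint_D.
Qed.

Lemma veq_dmul n (g x h : dsym n) : normal g ->
  (forall j, isint (g j - (x j + h j))) -> g = dmul x h.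
Proof.
move=> ng e; apply: eq_of_veq ng (normal_dmul _ _) _ => j.
have -> : g j - dmul x h j = (g j - (x j + h j)) - (dmul x h j - (x j + h j)) by ring.
apply: isint_B; [exact: e | exact: dmulE].
Qed.

Definition Xv n w d (b1 b2 : bool) : dsym n :=
  fun j => (b1 : nat)%:R * sigma n j + (b2 : nat)%:R * JW w d j.

Lemma Xv_ff n w d j : @Xv n w d false false j = 0.
Proof. by rewrite /Xv /= !mulr0n !mul0r addr0. Qed.
Lemma Xv_tf n w d j : @Xv n w d true false j = sigma n j.
Proof. by rewrite /Xv /= mulr1n mulr0n mul1r mul0r addr0. Qed.
Lemma Xv_ft n w d j : @Xv n w d false true j = JW w d j.
Proof. by rewrite /Xv /= mulr1n mulr0n mul1r mul0r add0r. Qed.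
Lemma Xv_tt n w d j : @Xv n w d true true j = sigma n j + JW w d j.
Proof. by rewrite /Xv /= mulr1n mul1r mul1r. Qed.

Lemma Xv_add n w d b1 b2 c1 c2 j :
  @Xv n w d b1 b2 j + Xv w d c1 c2 j - Xv w d (b1 (+) c1) (b2 (+) c2) j
  - ((b2 && c2) : nat)%:R * (JW w d j + JW w d j)
  = ((b1 && c1) : nat)%:R * (sigma n j + sigma n j).
Proof.
case: b1 b2 c1 c2 => [] [] [] []; rewrite /Xv /= ?mulr1n ?mulr0n; ring.
Qed.
Theorem lemma5p7 (n : nat) (E : 'M[nat]_n) (w : 'I_n -> nat) (d : nat)
  (G : dsym n -> Prop) :
  (* W = sum_i prod_j x_j^{E i j} invertible, quasi-homogeneous *)
  (0 < d)%N -> (forall j, 0 < w j)%N ->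
  \det (map_mx (fun k : nat => k%:R : rat) E) != 0 ->
  (forall i, \sum_(j < n) E i j * w j = d)%N ->
  (* non-degenerate: isolated critical point at the origin *)
  (forall x : 'I_n -> algC,
      (forall j, (mderiv j (Wpoly E)).@[x] = 0) -> forall j, x j = 0) ->
  (2 * \sum_(j < n) w j = d)%N ->
  (* G is a subgroup of SL_W, regarded as fixing x_0 *)
  G (done_ n) -> (forall g h, G g -> G h -> G (dmul g h)) ->
  (forall g, G g -> forall j, g j = fracpart (g j)) ->
  (forall g, G g -> g ord0 = 0) ->
  (forall g, G g -> forall i,
       isint (\sum_(j < n) (E i j)%:R * g (lift ord0 j))) ->
  (forall g, G g -> isint (\sum_(j < n.+1) g j)) ->
  (* J_W^2 in G *)
  G (dmul (JW w d) (JW w d)) ->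
  let S := gen (fun g => G g \/ g = sigma n \/ g = JW w d) in
  let K := gen (fun g => G g \/ g = JV w d) in
  (* decomposition of the index set G[sigma, J_W] into the four cosets *)
  (forall g, S g <->
     G g \/ coset G (sigma n) g \/ coset G (JW w d) g \/ coset G (JV w d) g) /\
  (forall g, ~ (G g /\ coset G (sigma n) g)) /\
  (forall g, ~ (G g /\ coset G (JW w d) g)) /\
  (forall g, ~ (G g /\ coset G (JV w d) g)) /\
  (forall g, ~ (coset G (sigma n) g /\ coset G (JW w d) g)) /\
  (forall g, ~ (coset G (sigma n) g /\ coset G (JV w d) g)) /\
  (forall g, ~ (coset G (JW w d) g /\ coset G (JV w d) g)) /\
  (* [H]_G + [H]_{J_V G} is Z x Z-graded *)
  (forall g a, G g \/ coset G (JV w d) g -> jac_inv_form E K g a ->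
     isint (bideg w d g a).1 /\ isint (bideg w d g a).2) /\
  (* [H]_{sigma G} + [H]_{J_W G} is (1/2+Z) x (1/2+Z)-graded *)
  (forall g a, coset G (sigma n) g \/ coset G (JW w d) g ->
     jac_inv_form E K g a ->
     ishalfint (bideg w d g a).1 /\ ishalfint (bideg w d g a).2).
Proof.
move=> d0 _ _ _ _ hd G1 GM Gn G0 _ Gage GJ2 S K.
have Gage' : forall g, G g -> isint (A g) by [].
have cG : forall g, G g -> g ord0 = 0 /\ isint (age g) by move=> g Gg; split; [exact: G0|exact: Gage].
have cS : forall g, coset G (sigma n) g -> g ord0 = 1/2 /\ isint (age g - 1/2).
  move=> g [h [Gh ->]]; split; first by rewrite /dmul (G0 _ Gh) addr0 sigma0 fracpart_half.
  by rewrite -(A_sigma n); apply: coset_age; exact: Gage.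
have cW : forall g, coset G (JW w d) g -> g ord0 = 0 /\ isint (age g - 1/2).
  move=> g [h [Gh ->]]; split; first by rewrite /dmul (G0 _ Gh) addr0 JW0 fracpart0.
  by rewrite -(A_JW hd d0); apply: coset_age; exact: Gage.
have cV : forall g, coset G (JV w d) g -> g ord0 = 1/2 /\ isint (age g).
  move=> g [h [Gh ->]]; split; first by rewrite /dmul (G0 _ Gh) addr0 JV0 fracpart_half.
  have e1 := coset_age (JV w d) (Gage _ Gh).
  have e2 := A_JV hd d0.
  have -> : age (dmul (JV w d) h) = (A (dmul (JV w d) h) - A (JV w d)) + (A (JV w d) - 1) + 1
    by rewrite /age /A; ring.
  by apply: isint_D; [apply: isint_D|exact: int_num1].
have h0 : (1/2 : rat) <> 0 by [].
pose U' g := exists b1 b2 h, G h /\ normal g /\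
  forall j, isint (g j - (Xv w d b1 b2 j + h j)).
pose U g := G g \/ coset G (sigma n) g \/ coset G (JW w d) g \/ coset G (JV w d) g.
have UtoU' : forall g, U g -> U' g.
  move=> g [Gg|[[h [Gh ->]]|[[h [Gh ->]]|[h [Gh ->]]]]].
  - exists false, false, g; split=> //; split; first exact: Gn.
    by move=> j; rewrite Xv_ff add0r subrr; exact: isint_0.
  - exists true, false, h; split=> //; split; first exact: normal_dmul.
    by move=> j; rewrite Xv_tf; exact: dmulE.
  - exists false, true, h; split=> //; split; first exact: normal_dmul.
    by move=> j; rewrite Xv_ft; exact: dmulE.
  - exists true, true, h; split=> //; split; first exact: normal_dmul.
    move=> j; rewrite Xv_tt.
    have -> : dmul (JV w d) h j - (sigma n j + JW w d j + h j) =
      (dmul (JV w d) h j - (JV w d j + h j)) + (JV w d j - (sigma n j + JW w d j)) by ring.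
    apply: isint_D; exact: dmulE.
have U'toU : forall g, U' g -> U g.
  move=> g [b1 [b2 [h [Gh [ng e]]]]]; case: b1 b2 e => [] [] e.
  - right; right; right; exists h; split=> //; apply: veq_dmul ng _ => j.
    have := e j; rewrite Xv_tt => ej.
    have -> : g j - (JV w d j + h j) = (g j - (sigma n j + JW w d j + h j))
       - (JV w d j - (sigma n j + JW w d j)) by ring.
    apply: isint_B => //; exact: dmulE.
  - right; left; exists h; split=> //; apply: veq_dmul ng _ => j.
    by have := e j; rewrite Xv_tf.
  - right; right; left; exists h; split=> //; apply: veq_dmul ng _ => j.
    by have := e j; rewrite Xv_ft.
  - left; suff -> : g = h by [].
    apply: eq_of_veq ng (Gn _ Gh) _ => j.
    by have := e j; rewrite Xv_ff add0r.
have U'mul : forall g g', U' g -> U' g' -> U' (dmul g g').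
  move=> g g' [b1 [b2 [h [Gh [ng eg]]]]] [c1 [c2 [k [Gk [ng' eg']]]]].
  set m := if b2 && c2 then dmul (dmul (JW w d) (JW w d)) (dmul h k) else dmul h k.
  exists (b1 (+) c1), (b2 (+) c2), m.
  split; first by have Ghk := GM _ _ Gh Gk; rewrite /m; case: (b2 && c2) => //; exact: (GM _ _ GJ2 Ghk).
  split; first exact: normal_dmul.
  move=> j.
  have Hm : isint (m j - (((b2 && c2) : nat)%:R * (JW w d j + JW w d j) + h j + k j)).
    rewrite /m; case: (b2 && c2) => /=.
      rewrite mulr1n mul1r.
      set JJ := dmul (JW w d) (JW w d).
      have -> : dmul JJ (dmul h k) j - (JW w d j + JW w d j + h j + k j) =
        (dmul JJ (dmul h k) j - (JJ j + dmul h k j)) + (JJ j - (JW w d j + JW w d j))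
        + (dmul h k j - (h j + k j)) by ring.
      by apply: isint_D; [apply: isint_D|]; exact: dmulE.
    rewrite mulr0n mul0r add0r; exact: dmulE.
  have HR := Xv_add w d b1 b2 c1 c2 j.
  have -> : dmul g g' j - (Xv w d (b1 (+) c1) (b2 (+) c2) j + m j) =
    (dmul g g' j - (g j + g' j)) + (g j - (Xv w d b1 b2 j + h j))
    + (g' j - (Xv w d c1 c2 j + k j))
    - (m j - (((b2 && c2) : nat)%:R * (JW w d j + JW w d j) + h j + k j))
    + (Xv w d b1 b2 j + Xv w d c1 c2 j - Xv w d (b1 (+) c1) (b2 (+) c2) j
       - ((b2 && c2) : nat)%:R * (JW w d j + JW w d j)) by ring.
  rewrite HR.
  apply: isint_D; last by apply: isint_M; [exact: isint_nat|exact: sigma2].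
  apply: isint_B => //; apply: isint_D; [apply: isint_D|] => //; exact: dmulE.
have degint : forall g a, jac_inv_form E K g a -> isint (degf w d g a).
  move=> g a [_ [inv _]].
  have := inv (JV w d) (gen_in (or_intror erefl)).
  rewrite /degf; congr isint; apply: eq_bigr => j _; by rewrite JV_q.
split.
  move=> g; split.
    move=> Sg; apply: U'toU; elim: Sg.
    - apply: UtoU'; left; exact: G1.
    - move=> x [Gx|[->|->]]; first by apply: UtoU'; left.
        exists true, false, (done_ n); split=> //; split; first exact: normal_sigma.
        by move=> j; rewrite Xv_tf /done_ addr0 subrr; exact: isint_0.
      exists false, true, (done_ n); split=> //; split; first exact: normal_JW.
      by move=> j; rewrite Xv_ft /done_ addr0 subrr; exact: isint_0.
    - by move=> x y _ Ux _ Uy; apply: U'mul.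
  move=> [Gg|[[h [Gh ->]]|[[h [Gh ->]]|[h [Gh ->]]]]].
  - by apply: gen_in; left.
  - by apply: gen_mul; apply: gen_in; [right; left|left].
  - by apply: gen_mul; apply: gen_in; [right; right|left].
  - apply: gen_mul; last by apply: gen_in; left.
    by apply: gen_mul; apply: gen_in; [right; left|right; right].
split; first by move=> g [/cG [a _] /cS [b _]]; apply: h0; rewrite -b a.
split; first by move=> g [/cG [_ a] /cW [_ b]]; exact: half_not a b.
split; first by move=> g [/cG [a _] /cV [b _]]; apply: h0; rewrite -b a.
split; first by move=> g [/cS [a _] /cW [b _]]; apply: h0; rewrite -a b.
split; first by move=> g [/cS [_ a] /cV [_ b]]; exact: half_not b a.
split; first by move=> g [/cW [a _] /cV [b _]]; apply: h0; rewrite -b a.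
split.
  move=> g a Hg Hj; have dI := degint g a Hj.
  have aI : isint (age g) by case: Hg => [/cG|/cV] [].
  rewrite /bideg /=; split; last exact: isint_D.
  by apply: isint_D => //; apply: isint_B => //; exact: isint_nat.
move=> g a Hg Hj; have dI := degint g a Hj.
have aI : isint (age g - 1/2) by case: Hg => [/cS|/cW] [].
rewrite /bideg /ishalfint /=; split.
  have -> : (#|Fg g|)%:R - degf w d g a + age g - 1/2 =
    ((#|Fg g|)%:R - degf w d g a) + (age g - 1/2) by ring.
  by apply: isint_D => //; apply: isint_B => //; exact: isint_nat.
have -> : degf w d g a + age g - 1/2 = degf w d g a + (age g - 1/2) by ring.
exact: isint_D.
Qed.
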